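(* Let $\mathbb{K}=(K,+,\times,0,1)$ be a semiring. The following are equivalent: (1) $\mathbb{K}$ is additively absorptive and multiplicatively idempotent; (2) $\mathbb{K}$ is additively positive and the inner consistency property holds for $\mathbb{K}$-relations via the standard $\mathbb{K}$-join.
   Context: A semiring: $(K,+,0)$ and $(K,\times,1)$ commutative monoids, $\times$ distributes over $+$, $0\times p=0$. Additively positive: $p+q=0$ implies $p=q=0$. Additively absorptive: $p+p\times q=p$ for all $p,q$. Multiplicatively idempotent: $p\times p=p$ for all $p$. Attributes have domains (arbitrary sets); for a finite attribute set $X$, an $X$-tuple assigns each attribute a value in its domain; $t[Y]$ is restriction. A $\mathbb{K}$-relation over $X$ is a function $R$ from $X$-tuples to $K$ with finite support $R'$; marginals $R[Y](t)=\sum_{r\in R',r[Y]=t}R(r)$. $R(X),S(Y)$ are inner consistent if $R[X\cap Y]=S[X\cap Y]$. The standard $\mathbb{K}$-join of $R(X)$ and $S(Y)$ is the $\mathbb{K}$-relation $W$ over $X\cup Y$ with $W(t)=R(t[X])\times S(t[Y])$. The inner consistency property holds for $\mathbb{K}$-relations via the standard $\mathbb{K}$-join if for any two inner consistent $\mathbb{K}$-relations $R(X),S(Y)$, their standard $\mathbb{K}$-join $W$ satisfies $W[X]=R$ and $W[Y]=S$. *)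

(* Defs.v *)
From HB Require Import structures.
From mathcomp Require Import all_boot all_order all_algebra finmap.
From mathcomp Require Import boolp classical_sets cardinality fsbigop.

Set Implicit Arguments.
Unset Strict Implicit.
Unset Printing Implicit Defensive.
Import GRing.Theory.
Local Open Scope ring_scope.


Definition add_positive (K : comPzSemiRingType) : Prop :=
  forall p q : K, p + q = 0 -> p = 0 /\ q = 0.
Definition add_absorptive (K : comPzSemiRingType) : Prop :=
  forall p q : K, p + p * q = p.
Definition mul_idempotent (K : comPzSemiRingType) : Prop :=
  forall p : K, p * p = p.

(* Attributes of type A, attribute a has domain D a.
   An X-tuple assigns to each attribute of the finite set X a value of its domain. *)
Definition Xtuple (A : choiceType) (D : A -> choiceType) (X : {fset A}) :=
  {dffun forall a : X, D (fsval a)}.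

Definition restr (A : choiceType) (D : A -> choiceType) (X Y : {fset A})
  (H : (Y `<=` X)%fset) (t : Xtuple D X) : Xtuple D Y :=
  [ffun a : Y => t (fincl H a)].

(* A K-relation over X: a function from X-tuples to K (finite support is
   imposed separately by [finite_supp]). *)
Definition Krel (K : comPzSemiRingType) (A : choiceType) (D : A -> choiceType)
  (X : {fset A}) := Xtuple D X -> K.

Definition finite_supp (K : comPzSemiRingType) (A : choiceType)
  (D : A -> choiceType) (X : {fset A}) (R : Krel K D X) : Prop :=
  finite_set [set t | R t != 0].

Definition marginal (K : comPzSemiRingType) (A : choiceType)
  (D : A -> choiceType) (X Y : {fset A}) (H : (Y `<=` X)%fset) (R : Krel K D X)
  : Krel K D Y :=
  fun t => (\sum_(r \in [set r | R r != 0 /\ restr H r = t]) R r)%R.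

Definition inner_consistent (K : comPzSemiRingType) (A : choiceType)
  (D : A -> choiceType) (X Y : {fset A}) (R : Krel K D X) (S : Krel K D Y) : Prop :=
  marginal (fsubsetIl X Y) R = marginal (fsubsetIr X Y) S.

Definition std_join (K : comPzSemiRingType) (A : choiceType)
  (D : A -> choiceType) (X Y : {fset A}) (R : Krel K D X) (S : Krel K D Y)
  : Krel K D (X `|` Y)%fset :=
  fun t => R (restr (fsubsetUl X Y) t) * S (restr (fsubsetUr X Y) t).

Definition inner_consistency_property (K : comPzSemiRingType) : Prop :=
  forall (A : choiceType) (D : A -> choiceType) (X Y : {fset A})
         (R : Krel K D X) (S : Krel K D Y),
    finite_supp R -> finite_supp S ->
    inner_consistent R S ->
    marginal (fsubsetUl X Y) (std_join R S) = R /\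
    marginal (fsubsetUr X Y) (std_join R S) = S.

(* Main.v *)
Require Import Defs.
From mathcomp Require Import all_boot all_algebra.
From mathcomp Require Import all_boot all_algebra finmap.
From mathcomp Require Import boolp classical_sets cardinality fsbigop.
Set Implicit Arguments.
Unset Strict Implicit.
Unset Printing Implicit Defensive.
Import GRing.Theory.
Local Open Scope ring_scope.
Local Open Scope classical_set_scope.

Section Core.
Variables (K : comPzSemiRingType) (A : choiceType) (D : A -> choiceType).

Lemma tuple_sub (X : {fset A}) (f : Xtuple D X) (a : A) (h1 h2 : a \in X) :
  f [` h1]%fset = f [` h2]%fset.
Proof. by rewrite (bool_irrelevance h1 h2). Qed.
Arguments tuple_sub {X} f a h1 h2.

Lemma restrE (X Y : {fset A}) (H : (Y `<=` X)%fset) (t : Xtuple D X) (a : A)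
  (h : a \in Y) (h' : a \in X) : restr H t [` h]%fset = t [` h']%fset.
Proof. by rewrite /restr ffunE /fincl /=; apply: tuple_sub. Qed.

Lemma xtupleP (X : {fset A}) (f g : Xtuple D X) :
  (forall a (h : a \in X), f [` h]%fset = g [` h]%fset) -> f = g.
Proof. by move=> H; apply/ffunP => -[a h]; apply: H. Qed.

Lemma marg_supp (X : {fset A}) (R : Krel K D X) (P : set (Xtuple D X)) :
  \sum_(r \in [set r | R r != 0 /\ P r]) R r = \sum_(r \in P) R r.
Proof.
rewrite [RHS]fsbig_supp; apply: eq_fsbigl; apply/seteqP; split => x /=.
  by case=> /eqP h p.
by case=> p /eqP h.
Qed.

Section Glue.
Variables (X Y U : {fset A}) (hU : (U `<=` X `|` Y)%fset).

Lemma inY (c : U) : fsval c \notin X -> fsval c \in Y.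
Proof.
move=> nX; have := fsubsetP hU _ (fsvalP c); rewrite in_fsetU.
by rewrite (negbTE nX).
Qed.

Definition pickv (r : Xtuple D X) (s : Xtuple D Y) (c : U) : D (fsval c) :=
  match Sumbool.sumbool_of_bool (fsval c \in X) with
  | left h => r [` h]%fset
  | right h => s [` inY (negbT h)]%fset
  end.

Definition glue r s : Xtuple D U := [ffun c => pickv r s c].

Lemma glueX r s a (h : a \in U) (hx : a \in X) : glue r s [` h]%fset = r [` hx]%fset.
Proof.
rewrite /glue ffunE /pickv /=.
destruct (Sumbool.sumbool_of_bool (a \in X)) as [h2|h2]; first exact: tuple_sub.
by exfalso; rewrite h2 in hx.
Qed.

Lemma glueY r s a (h : a \in U) (hx : a \notin X) (hy : a \in Y) :
  glue r s [` h]%fset = s [` hy]%fset.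
Proof.
rewrite /glue ffunE /pickv /=.
destruct (Sumbool.sumbool_of_bool (a \in X)) as [h2|h2]; last exact: tuple_sub.
by exfalso; rewrite h2 in hx.
Qed.
End Glue.

Section Main.
Variables (X Y U Z : {fset A}) (hXU : (X `<=` U)%fset) (hYU : (Y `<=` U)%fset)
  (hU : (U `<=` X `|` Y)%fset) (hZX : (Z `<=` X)%fset) (hZY : (Z `<=` Y)%fset)
  (hI : (X `&` Y `<=` Z)%fset).

Lemma glue_restrX r s : restr hXU (glue hU r s) = r.
Proof.
apply: xtupleP => a h; rewrite (restrE _ _ h (fsubsetP hXU _ h)).
exact: (glueX hU r s (fsubsetP hXU a h) h).
Qed.

Lemma glue_restrY r s : restr hZY s = restr hZX r -> restr hYU (glue hU r s) = s.
Proof.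
move=> E; apply: xtupleP => a h; rewrite (restrE _ _ h (fsubsetP hYU _ h)).
case: (boolP (a \in X)) => hx.
  rewrite (glueX _ _ _ _ hx).
  have hz : a \in Z by apply: (fsubsetP hI); rewrite in_fsetI hx h.
  move/ffunP: E => /(_ [` hz]%fset).
  by rewrite (restrE _ _ hz h) (restrE _ _ hz hx) => ->.
exact: (glueY hU r s (fsubsetP hYU a h) hx h).
Qed.

Lemma glue_surj r t : restr hXU t = r ->
  exists s, restr hZY s = restr hZX r /\ glue hU r s = t.
Proof.
move=> E; exists (restr hYU t); split.
  apply: xtupleP => a h; rewrite -E.
  rewrite (restrE _ _ h (fsubsetP hZY _ h)) (restrE _ _ h (fsubsetP hZX _ h)).
  rewrite (restrE _ _ (fsubsetP hZY _ h) (fsubsetP hYU _ (fsubsetP hZY _ h))).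
  rewrite (restrE _ _ (fsubsetP hZX _ h) (fsubsetP hXU _ (fsubsetP hZX _ h))).
  exact: (tuple_sub t a).
apply: xtupleP => a h; case: (boolP (a \in X)) => hx.
  rewrite (glueX _ _ _ _ hx) -E (restrE _ _ hx (fsubsetP hXU _ hx)).
  by rewrite (bool_irrelevance (fsubsetP hXU a hx) h).
have hy : a \in Y by have := fsubsetP hU _ h; rewrite in_fsetU (negbTE hx).
rewrite (glueY _ _ _ _ hx hy) (restrE _ _ hy (fsubsetP hYU _ hy)).
by rewrite (bool_irrelevance (fsubsetP hYU a hy) h).
Qed.

Lemma core0 (R : Krel K D X) (S : Krel K D Y) r :
  finite_supp S ->
  marginal hXU (fun t => R (restr hXU t) * S (restr hYU t)) r =
  R r * marginal hZY S (restr hZX r).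
Proof.
move=> finS.
rewrite [LHS]/marginal [LHS]marg_supp.
set P := [set t | restr hXU t = r].
set Q := [set s | restr hZY s = restr hZX r].
transitivity (\sum_(t \in P) R r * S (restr hYU t)).
  by apply: eq_fsbigr => t; rewrite inE /= => ->.
rewrite (reindex_fsbig (glue hU r) Q P); last first.
  split.
  - by move=> s _; rewrite /P /= glue_restrX.
  - move=> s1 s2; rewrite !inE /Q /= => h1 h2 e.
    by rewrite -(glue_restrY h1) -(glue_restrY h2) e.
  - move=> t; rewrite /P /= => /glue_surj [s [h1 h2]]; by exists s.
transitivity (\sum_(s \in Q) R r * S s).
  by apply: eq_fsbigr => s; rewrite inE /Q /= => /glue_restrY ->.
rewrite -(@full_fsbig_distrr _ 0 *%R +%R _ (R r) Q S); last first.
  by apply: sub_finite_set finS => x [_ /= /eqP].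
by rewrite /marginal marg_supp.
Qed.

Lemma core (R : Krel K D X) (S : Krel K D Y) :
  add_absorptive K -> mul_idempotent K ->
  finite_supp R -> finite_supp S ->
  marginal hZX R = marginal hZY S ->
  marginal hXU (fun t => R (restr hXU t) * S (restr hYU t)) = R.
Proof.
move=> abs idem finR finS cons; apply: funext => r.
rewrite core0 // -cons /marginal marg_supp.
have [->|Rr0] := eqVneq (R r) 0; first by rewrite mul0r.
rewrite fsbig_supp (fsbigD1 r); last 2 first.
- by apply: sub_finite_set finR => x [_ /= /eqP].
- by split=> //=; apply/eqP.
by rewrite /= mulrDr idem abs.
Qed.
End Main.
End Core.

Section Ex.
Variable K : comPzSemiRingType.
Definition Du : unit -> choiceType := fun _ => bool : choiceType.
Definition Xu : {fset unit} := [fset tt]%fset.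
Definition Yu : {fset unit} := fset0.
Definition tX : tt \in Xu := fset11 tt.
Definition mk (b : bool) : Xtuple Du Xu := [ffun _ => b].

Lemma allmk (t : Xtuple Du Xu) : t = mk (t [` tX]%fset).
Proof.
apply: xtupleP.
move=> -[] h.
by rewrite /mk ffunE (bool_irrelevance h tX).
Qed.

Lemma mkE b : mk b [` tX]%fset = b.
Proof. by rewrite ffunE. Qed.

Lemma setT_X : [set: Xtuple Du Xu] = [set mk true] `|` [set mk false].
Proof.
apply/seteqP; split => t //= _.
rewrite (allmk t); case: (t [` tX]%fset); [left|right]; done.
Qed.

Lemma finT : finite_set [set: Xtuple Du Xu].
Proof. by rewrite setT_X finite_setU; split; apply: finite_set1. Qed.

Lemma allY (s1 s2 : Xtuple Du Yu) : s1 = s2.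
Proof. by apply: xtupleP => a h; exfalso; rewrite in_fset0 in h. Qed.

Lemma allZ (s1 s2 : Xtuple Du (Xu `&` Yu)%fset) : s1 = s2.
Proof. by apply: xtupleP => a h; exfalso; rewrite in_fsetI in_fset0 andbF in h. Qed.

Definition e0 : Xtuple Du Yu := restr (fsub0set Xu) (mk true).

Lemma key (p q : K) : inner_consistency_property K -> p * (p + q) = p.
Proof.
move=> icp.
pose R : Krel K Du Xu := fun r => if r [` tX]%fset then p else q.
pose S : Krel K Du Yu := fun _ => p + q.
have finR : finite_supp R by apply: sub_finite_set finT.
have finS : finite_supp S.
  apply: (@sub_finite_set _ _ [set e0]); last exact: finite_set1.
  by move=> s _; rewrite /= (allY s e0).
have cons : inner_consistent R S.
  apply: funext => z; rewrite /marginal !marg_supp.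
  transitivity (\sum_(r \in [set: Xtuple Du Xu]) R r).
    by apply: eq_fsbigl; apply/seteqP; split => r //= _; apply: allZ.
  transitivity (\sum_(s \in [set e0]) S s); last first.
    by apply: eq_fsbigl; apply/seteqP; split => s /= _; [apply: allZ | apply: allY].
  rewrite fsbig_set1 setT_X fsbigU0 ?fsbig_set1; try exact: finite_set1.
    by rewrite /R !mkE.
  move=> t [/= -> /(congr1 (fun f : Xtuple Du Xu => f [` tX]%fset))].
  by rewrite !mkE.
have [H _] := icp _ Du Xu Yu R S finR finS cons.
have := congr1 (fun f => f (mk true)) H.
rewrite /std_join.
rewrite (core0 (fsubsetUl Xu Yu) (fsubsetUr Xu Yu) (fsubset_refl _) (fsubsetIl Xu Yu) (fsubsetIr Xu Yu) (fsubset_refl _)) //.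
rewrite /R mkE /marginal marg_supp => H0.
rewrite -[in RHS]H0; congr (p * _).
transitivity (\sum_(s \in [set e0]) S s); first by rewrite fsbig_set1.
by apply: eq_fsbigl; apply/seteqP; split => s /= _; [apply: allZ | apply: allY].
Qed.
End Ex.

Theorem proposition19 (K : comPzSemiRingType) :
  (add_absorptive K /\ mul_idempotent K) <->
  (add_positive K /\ inner_consistency_property K).
Proof.
split.
  move=> [abs idem]; split.
    move=> p q pq0.
    have pp : p + p = p by have := abs p 1; rewrite mulr1.
    have qq : q + q = q by have := abs q 1; rewrite mulr1.
    split.
      have : p + (p + q) = p by rewrite pq0 addr0.
      by rewrite addrA pp pq0.
    have : q + (p + q) = q by rewrite pq0 addr0.
    by rewrite addrCA qq pq0.
  move=> A D X Y R S finR finS cons; split.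
    exact: (core (fsubsetUl X Y) (fsubsetUr X Y) (fsubset_refl _)
      (fsubset_refl _) abs idem finR finS cons).
  have -> : std_join R S = (fun t => S (restr (fsubsetUr X Y) t) *
                                     R (restr (fsubsetUl X Y) t)).
    by apply: funext => t; rewrite /std_join mulrC.
  have hU : (X `|` Y `<=` Y `|` X)%fset by rewrite fsetUC.
  have hI : (Y `&` X `<=` X `&` Y)%fset by rewrite fsetIC.
  exact: (core (fsubsetUr X Y) (fsubsetUl X Y) hU hI abs idem finS finR (esym cons)).
move=> [_ icp].
have kp := fun p q : K => key p q icp.
have idem : mul_idempotent K by move=> p; have := kp p 0; rewrite addr0.
split=> //.
by move=> p q; have := kp p q; rewrite mulrDr idem.
Qed.
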